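(* Let $B$ be a Frobenius algebra over $\mathbb{Q}$ and $n\ge0$. Then the algebra $A_n(B)$ is a Frobenius algebra.
   Context: $A_n$ is the nilCoxeter algebra: the unital $\mathbb{Q}$-algebra generated by $Y_1,\dots,Y_{n-1}$ with relations $Y_i^2=0$, $Y_iY_j=Y_jY_i$ for $|i-j|>1$, $Y_iY_{i+1}Y_i=Y_{i+1}Y_iY_{i+1}$; for $w\in S_n$ with reduced expression $w=s_{i_1}\cdots s_{i_r}$, $Y_w=Y_{i_1}\cdots Y_{i_r}$, and $\{Y_w\}_{w\in S_n}$ is a basis of $A_n$. $A_n(B)$ is the semidirect product of $A_n$ and $B^{\otimes n}$: the algebra generated by the subalgebras $A_n$ and $B^{\otimes n}$, with underlying space $A_n\otimes B^{\otimes n}$, subject to $Y_w(b_1\otimes\cdots\otimes b_n)=(b_{w(1)}\otimes\cdots\otimes b_{w(n)})Y_w$ for $w\in S_n$, $b_i\in B$. A Frobenius algebra is a finite-dimensional algebra $C$ with a linear map $\mathrm{tr}:C\to\mathbb{Q}$ such that for every nonzero $y\in C$ there is $y'$ with $\mathrm{tr}(yy')\neq0$. *)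

(* Defs.v *)
From HB Require Import structures.
From mathcomp Require Import all_boot all_order all_algebra all_fingroup.
Set Implicit Arguments. Unset Strict Implicit. Unset Printing Implicit Defensive.
Import GRing.Theory.
Local Open Scope ring_scope.

Definition is_Q_algebra (V : vectType rat) (mul : V -> V -> V) (one : V) : Prop :=
  [/\ (forall (a : rat) (x y z : V), mul (a *: x + y) z = a *: mul x z + mul y z),
      (forall (a : rat) (x y z : V), mul z (a *: x + y) = a *: mul z x + mul z y),
      (forall x y z : V, mul x (mul y z) = mul (mul x y) z),
      (forall x : V, mul one x = x) &
      (forall x : V, mul x one = x)].

Definition is_frobenius_algebra (V : vectType rat) (mul : V -> V -> V) (one : V)
  : Prop :=
  is_Q_algebra mul one /\
  exists tr : V -> rat,
    (forall (a : rat) (x y : V), tr (a *: x + y) = a * tr x + tr y) /\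
    (forall y : V, y != 0 -> exists y' : V, tr (mul y y') != 0).

Definition coxeter_length n (w : 'S_n) : nat :=
  #|[set p : 'I_n * 'I_n | (p.1 < p.2)%N && (w p.2 < w p.1)%N]|.

(* ---- The semidirect product A_n(B) ----
   B is a finite-dimensional Q-algebra (V = B, mulB, oneB); we fix the basis
   e = vbasis {:B} of B, so that B^{(x)n} has basis e_alpha = e_{alpha 1} (x) ... (x) e_{alpha n},
   alpha : 'I_n -> 'I_d, and A_n(B) = A_n (x) B^{(x)n} has basis Y_w e_alpha. *)

Definition bdim (B : vectType rat) := \dim (fullv : {vspace B}).

Definition AnB_index (B : vectType rat) (n : nat) : finType :=
  ('S_n * {ffun 'I_n -> 'I_(bdim B)})%type.

(* Underlying vector space: coefficient functions on the basis {Y_w e_alpha}. *)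
Definition AnB (B : vectType rat) (n : nat) : vectType rat :=
  {ffun AnB_index B n -> rat^o}.

Definition strconst (B : vectType rat) (mulB : B -> B -> B)
  (a b k : 'I_(bdim B)) : rat :=
  coord (vbasis fullv) k (mulB (tnth (vbasis fullv) a) (tnth (vbasis fullv) b)).

(* Coefficient of e_gamma in e_alpha * e_beta in B^{(x)n} (componentwise product). *)
Definition tens_const (B : vectType rat) (mulB : B -> B -> B) (n : nat)
  (al be ga : {ffun 'I_n -> 'I_(bdim B)}) : rat :=
  \prod_(i < n) strconst mulB (al i) (be i) (ga i).

(* e_alpha Y_v = Y_v e_{alpha'} with alpha' j = alpha (v^-1 j); this is forced by
   Y_v (b_1 (x) ... (x) b_n) = (b_{v(1)} (x) ... (x) b_{v(n)}) Y_v. *)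
Definition perm_index (B : vectType rat) (n : nat) (v : 'S_n)
  (al : {ffun 'I_n -> 'I_(bdim B)}) : {ffun 'I_n -> 'I_(bdim B)} :=
  [ffun j => al ((v^-1)%g j)].

(* Multiplication:
   (Y_u e_alpha)(Y_v e_beta) = Y_u Y_v e_{alpha'} e_beta,
   Y_u Y_v = Y_{uv} if l(uv) = l(u) + l(v), and 0 otherwise.
   (Products in 'S_n follow MathComp's convention (u * v) x = v (u x), which is the
   one making the stated commutation relation consistent.) *)
Definition AnB_mul (B : vectType rat) (mulB : B -> B -> B) (n : nat)
  (x y : AnB B n) : AnB B n :=
  [ffun p : AnB_index B n =>
     \sum_(q : AnB_index B n) \sum_(r : AnB_index B n)
       if (q.1 * r.1 == p.1)%g &&
          (coxeter_length (q.1 * r.1)%g == coxeter_length q.1 + coxeter_length r.1)%N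
       then x q * y r * tens_const mulB (perm_index r.1 q.2) r.2 p.2
       else 0].

Definition AnB_one (B : vectType rat) (oneB : B) (n : nat) : AnB B n :=
  [ffun p : AnB_index B n =>
     if p.1 == 1%g then \prod_(i < n) coord (vbasis fullv) (p.2 i) oneB else 0].

(* Main.v *)
Require Import Defs.
From mathcomp Require Import all_boot all_order all_algebra all_fingroup.
From mathcomp Require Import zify ring.
Set Implicit Arguments. Unset Strict Implicit. Unset Printing Implicit Defensive.

Definition invs n (w : 'S_n) : {set 'I_n * 'I_n} :=
  [set p : 'I_n * 'I_n | (p.1 < p.2)%N && (w p.2 < w p.1)%N].

Lemma cl_invs n (w : 'S_n) : coxeter_length w = #|invs w|.
Proof. by []. Qed.

Lemma cl_sub n (x y : 'S_n) :
  (coxeter_length (x * y)%g <= coxeter_length x + coxeter_length y)%N.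
Proof.
rewrite !cl_invs.
pose g (p : 'I_n * 'I_n) := (x p.1, x p.2).
have ginj : injective g.
  by move=> [a b] [c d] [/perm_inj -> /perm_inj ->].
rewrite -(card_preimset (invs y) ginj).
apply: leq_trans (leq_card_setU _ _).
apply: subset_leq_card; apply/subsetP => [[i j]].
rewrite !inE /= !permM => /andP [ij yx].
rewrite /g /= ij yx andbT /=.
case: ltngtP => // h.
by move: yx; rewrite (val_inj h) ltnn.
Qed.

Lemma cl1 n : coxeter_length (1 : 'S_n)%g = 0.
Proof.
rewrite cl_invs; apply/eqP; rewrite cards_eq0; apply/eqP/setP => [[i j]].
rewrite !inE /= !perm1; apply/negbTE; case: ltngtP => //.
Qed.

Lemma cox_assoc n (u v w : 'S_n) :
  (coxeter_length (u * v)%g == coxeter_length u + coxeter_length v)%N &&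
  (coxeter_length (u * v * w)%g == coxeter_length (u * v)%g + coxeter_length w)%N
  =
  (coxeter_length (v * w)%g == coxeter_length v + coxeter_length w)%N &&
  (coxeter_length (u * (v * w))%g == coxeter_length u + coxeter_length (v * w)%g)%N.
Proof.
have E : coxeter_length (u * (v * w))%g = coxeter_length (u * v * w)%g.
  by rewrite mulgA.
rewrite E.
have h1 := cl_sub u (v * w)%g; have h2 := cl_sub v w.
have h3 := cl_sub (u * v)%g w; have h4 := cl_sub u v.
rewrite E in h1.
apply/idP/idP => /andP [/eqP e1 /eqP e2]; apply/andP; split; apply/eqP; lia.
Qed.

Lemma w0_ex n : exists w0 : 'S_n, forall u : 'S_n,
  coxeter_length w0 = (coxeter_length u + coxeter_length (u^-1 * w0)%g)%N.
Proof.
have rinj : injective (@rev_ord n) by apply: can_inj rev_ordK.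
exists (perm rinj) => u.
set w0 := perm rinj.
have w0E : forall x, w0 x = rev_ord x := permE rinj.
pose pairs := [set p : 'I_n * 'I_n | (p.1 < p.2)%N].
have Hw0 : invs w0 = pairs.
  apply/setP => [[i j]]; rewrite !inE /= !permE /=.
  have := ltn_ord i; have := ltn_ord j.
  case: (ltnP i j) => h; rewrite ?andbF ?andbT //= => *; lia.
have E : coxeter_length (u * (u^-1 * w0))%g = coxeter_length w0.
  by rewrite mulKVg.
apply/eqP; rewrite eqn_leq; apply/andP; split.
  by rewrite -{1}E; apply: cl_sub.
rewrite !cl_invs Hw0.
pose f (p : 'I_n * 'I_n) := ((u^-1)%g p.1, (u^-1)%g p.2).
have finj : injective f.
  by move=> [a b] [c d] [/perm_inj -> /perm_inj ->].
rewrite -(card_imset (invs (u^-1 * w0)%g) finj).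
have dis : invs u :&: f @: invs (u^-1 * w0)%g = set0.
  apply/setP => [[i j]]; rewrite !inE /=; apply/negbTE/negP => /andP [/andP [ij uji]].
  case/imsetP => [[a b]]; rewrite !inE /= !permM => /andP [ab _] [ei ej].
  move: uji; rewrite ei ej !permKV => ba.
  by move: (ltn_trans ab ba); rewrite ltnn.
have := cardsUI (invs u) (f @: invs (u^-1 * w0)%g).
rewrite dis cards0 addn0 => <-.
apply: subset_leq_card; apply/subsetP => [[i j]]; rewrite !inE /=.
case/orP => [/andP [] //|].
case/imsetP => [[a b]]; rewrite !inE /= !permM !w0E => /andP [ab ba] [-> ->].
have := ltn_ord ((u^-1)%g a); have := ltn_ord ((u^-1)%g b).
move: ba; rewrite /=; lia.
Qed.

Import GRing.Theory.
Local Open Scope ring_scope.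

Section BLevel.
Variables (B : vectType rat) (mulB : B -> B -> B) (oneB : B).
Hypothesis HB : is_Q_algebra mulB oneB.

Local Notation d := (bdim B).
Local Notation X := (vbasis (fullv : {vspace B})).
Local Notation e i := (tnth X i).
Local Notation c := (strconst mulB).

Lemma mulB0l z : mulB 0 z = 0.
Proof.
case: HB => Hl _ _ _ _.
have h := Hl 1 0 0 z; rewrite scaler0 addr0 scale1r in h.
by apply: (addrI (mulB 0 z)); rewrite addr0 -h.
Qed.

Lemma mulB0r z : mulB z 0 = 0.
Proof.
case: HB => _ Hr _ _ _.
have h := Hr 1 0 0 z; rewrite scaler0 addr0 scale1r in h.
by apply: (addrI (mulB z 0)); rewrite addr0 -h.
Qed.

Lemma mulBZl a x z : mulB (a *: x) z = a *: mulB x z.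
Proof. case: HB => Hl _ _ _ _; by have := Hl a x 0 z; rewrite !addr0 mulB0l addr0. Qed.

Lemma mulBZr a x z : mulB z (a *: x) = a *: mulB z x.
Proof. case: HB => _ Hr _ _ _; by have := Hr a x 0 z; rewrite !addr0 mulB0r addr0. Qed.

Lemma mulBDl x y z : mulB (x + y) z = mulB x z + mulB y z.
Proof. case: HB => Hl _ _ _ _; by have := Hl 1 x y z; rewrite !scale1r. Qed.

Lemma mulBDr x y z : mulB z (x + y) = mulB z x + mulB z y.
Proof. case: HB => _ Hr _ _ _; by have := Hr 1 x y z; rewrite !scale1r. Qed.

Lemma mulB_suml (I : finType) (F : I -> B) z :
  mulB (\sum_i F i) z = \sum_i mulB (F i) z.
Proof.
apply: (big_ind2 (fun a b => mulB a z = b)); first exact: mulB0l.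
  by move=> a b a' b' <- <-; rewrite mulBDl.
by [].
Qed.

Lemma mulB_sumr (I : finType) (F : I -> B) z :
  mulB z (\sum_i F i) = \sum_i mulB z (F i).
Proof.
apply: (big_ind2 (fun a b => mulB z a = b)); first exact: mulB0r.
  by move=> a b a' b' <- <-; rewrite mulBDr.
by [].
Qed.

Lemma expand v : v = \sum_i coord X i v *: e i.
Proof.
rewrite {1}(coord_vbasis (memvf v)); apply: eq_bigr => i _.
by rewrite (tnth_nth 0).
Qed.

Lemma coord_e (b k : 'I_d) : coord X k (e b) = (b == k)%:R.
Proof. by rewrite (tnth_nth 0) coord_free // (basis_free (vbasisP fullv)). Qed.

Lemma coordZ k a v : coord X k (a *: v) = a * coord X k v.
Proof. by have := coord_is_scalar X k a v 0; rewrite !addr0 raddf0 addr0. Qed.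

Lemma coord_sum k (I : finType) (F : I -> B) :
  coord X k (\sum_i F i) = \sum_i coord X k (F i).
Proof. exact: raddf_sum. Qed.

Lemma cE a b k : c a b k = coord X k (mulB (e a) (e b)).
Proof. by []. Qed.

Lemma prodE a b : mulB (e a) (e b) = \sum_k c a b k *: e k.
Proof. exact: expand. Qed.

Lemma B_assoc a b c' m :
  \sum_k c a b k * c k c' m = \sum_k c b c' k * c a k m.
Proof.
case: HB => _ _ Ha _ _.
have L : coord X m (mulB (mulB (e a) (e b)) (e c')) = \sum_k c a b k * c k c' m.
  rewrite prodE mulB_suml coord_sum; apply: eq_bigr => k _.
  by rewrite mulBZl coordZ.
have R : coord X m (mulB (e a) (mulB (e b) (e c'))) = \sum_k c b c' k * c a k m.
  rewrite (prodE b) mulB_sumr coord_sum; apply: eq_bigr => k _.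
  by rewrite mulBZr coordZ.
by rewrite -L -R Ha.
Qed.

Lemma B_unit_l b k : \sum_a coord X a oneB * c a b k = (b == k)%:R.
Proof.
case: HB => _ _ _ H1 _.
rewrite -coord_e -(H1 (e b)) {2}(expand oneB) mulB_suml coord_sum.
by apply: eq_bigr => a _; rewrite mulBZl coordZ.
Qed.

Lemma B_unit_r b k : \sum_a c b a k * coord X a oneB = (b == k)%:R.
Proof.
case: HB => _ _ _ _ H1.
rewrite -coord_e -(H1 (e b)) {2}(expand oneB) mulB_sumr coord_sum.
by apply: eq_bigr => a _; rewrite mulBZr coordZ mulrC.
Qed.


Variable n : nat.
Local Notation J := {ffun 'I_n -> 'I_d}.
Local Notation T := (@tens_const B mulB n).
Local Notation pidx := (@perm_index B n).
Definition oB (g : J) := \prod_i coord X (g i) oneB.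

Lemma distr (F : 'I_n -> 'I_d -> rat) :
  \prod_i \sum_k F i k = \sum_(g : J) \prod_i F i (g i).
Proof. exact: bigA_distr_bigA. Qed.

Lemma distr' (F : 'I_n -> 'I_d -> rat) :
  \prod_(i < n) \sum_k F i k = \sum_(g : J) \prod_(i < n) F i (g i).
Proof. exact: bigA_distr_bigA. Qed.

Lemma prod_delta (b m : J) : \prod_i ((b i == m i)%:R : rat) = (b == m)%:R.
Proof.
have [->|ne] := eqVneq b m.
  by apply: big1 => i _; rewrite eqxx.
have [i hi] : exists i, b i != m i.
  apply/existsP; apply: contraR ne => /existsPn h; apply/eqP/ffunP => i.
  by have := h i; rewrite negbK => /eqP.
by rewrite (bigD1 i) //= (negbTE hi) mul0r.
Qed.

Lemma prod_delta' (b m : J) : \prod_(i < n) ((b i == m i)%:R : rat) = (b == m)%:R.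
Proof. exact: prod_delta. Qed.

Lemma T_assoc a b c' m :
  \sum_g T a b g * T g c' m = \sum_g T b c' g * T a g m.
Proof.
rewrite /tens_const.
transitivity (\prod_i \sum_k (c (a i) (b i) k * c k (c' i) (m i))).
  by rewrite distr; apply: eq_bigr => g _; rewrite -big_split.
transitivity (\prod_i \sum_k (c (b i) (c' i) k * c (a i) k (m i))).
  by apply: eq_bigr => i _; apply: B_assoc.
by rewrite distr; apply: eq_bigr => g _; rewrite -big_split.
Qed.

Lemma T_unit_l b m : \sum_g oB g * T g b m = (b == m)%:R.
Proof.
rewrite /tens_const /oB -prod_delta.
transitivity (\prod_i \sum_k (coord X k oneB * c k (b i) (m i))).
  by rewrite distr; apply: eq_bigr => g _; rewrite -big_split.
by apply: eq_bigr => i _; apply: B_unit_l.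
Qed.

Lemma T_unit_r b m : \sum_g T b g m * oB g = (b == m)%:R.
Proof.
rewrite /tens_const /oB -prod_delta.
transitivity (\prod_i \sum_k (c (b i) k (m i) * coord X k oneB)).
  by rewrite distr; apply: eq_bigr => g _; rewrite -big_split.
by apply: eq_bigr => i _; apply: B_unit_r.
Qed.

Lemma pidxM (v w : 'S_n) al : pidx (v * w)%g al = pidx w (pidx v al).
Proof. by apply/ffunP => j; rewrite !ffunE invMg permM. Qed.

Lemma pidx1 al : pidx 1%g al = al.
Proof. by apply/ffunP => j; rewrite !ffunE invg1 perm1. Qed.

Lemma pidxK (v : 'S_n) : cancel (pidx v) (pidx (v^-1)%g).
Proof. by move=> al; rewrite -pidxM mulgV pidx1. Qed.

Lemma pidx_inj (v : 'S_n) : injective (pidx v).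
Proof. exact: can_inj (@pidxK v). Qed.

Lemma sum_pidx (v : 'S_n) (F : J -> rat) : \sum_g F (pidx v g) = \sum_g F g.
Proof. by rewrite [RHS](reindex_inj (@pidx_inj v)). Qed.

Lemma prod_perm (v : 'S_n) (F : 'I_n -> rat) :
  \prod_j F ((v^-1)%g j) = \prod_i F i.
Proof.
rewrite (reindex_inj (@perm_inj _ v)); apply: eq_bigr => i _.
by have := permK v i; move=> ->.
Qed.

Lemma T_perm (v : 'S_n) a b g : T (pidx v a) (pidx v b) (pidx v g) = T a b g.
Proof.
symmetry; rewrite /tens_const -(prod_perm v); apply: eq_bigr => j _; by rewrite !ffunE.
Qed.

Lemma oB_perm (v : 'S_n) g : oB (pidx v g) = oB g.
Proof. symmetry; rewrite /oB -(prod_perm v); apply: eq_bigr => j _; by rewrite !ffunE. Qed.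


Local Notation I := (AnB_index B n).
Local Notation L := (@coxeter_length n).

Definition k3 (q r p : I) : rat :=
  if (q.1 * r.1 == p.1)%g && (L (q.1 * r.1)%g == L q.1 + L r.1)%N
  then T (pidx r.1 q.2) r.2 p.2 else 0.

Lemma mulE (x y : AnB B n) p :
  AnB_mul mulB x y p = \sum_q \sum_r x q * y r * k3 q r p.
Proof.
rewrite ffunE; apply: eq_bigr => q _; apply: eq_bigr => r _.
by rewrite /k3; case: ifP => _; rewrite ?mulr0.
Qed.

Lemma sum_forced (F : I -> rat) (u : 'S_n) :
  (forall t : I, t.1 != u -> F t = 0) -> \sum_t F t = \sum_g F (u, g).
Proof.
move=> H.
transitivity (\sum_t (fun a b => F (a, b)) t.1 t.2).
  by apply: eq_bigr => [[a b]].
rewrite -(pair_bigA _ (fun a b => F (a, b))) (bigD1 u) //=.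
rewrite [X in _ + X]big1 ?addr0 //.
by move=> a ne; apply: big1 => g _; apply: H.
Qed.

Lemma sum_ifif (b1 b2 : bool) (A B' : J -> rat) :
  \sum_g (if b1 then A g else 0) * (if b2 then B' g else 0) =
  if b1 && b2 then \sum_g A g * B' g else 0.
Proof.
case: b1; case: b2 => //=; rewrite ?big1 // => g _; by rewrite ?mulr0 ?mul0r.
Qed.


Lemma k3_assoc (q r' r p : I) :
  \sum_t k3 q r' t * k3 t r p = \sum_s k3 r' r s * k3 q s p.
Proof.
rewrite (@sum_forced _ (q.1 * r'.1)%g); last first.
  by move=> t ne; rewrite /k3 eq_sym (negbTE ne) mul0r.
rewrite [RHS](@sum_forced _ (r'.1 * r.1)%g); last first.
  by move=> t ne; rewrite /k3 eq_sym (negbTE ne) mul0r.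
rewrite /k3 /= !eqxx /= !sum_ifif.
have E : (q.1 * (r'.1 * r.1))%g = (q.1 * r'.1 * r.1)%g by rewrite mulgA.
rewrite E andbCA [in RHS]andbCA cox_assoc E.
case: ifP => // _.
transitivity (\sum_g T (pidx r.1 (pidx r'.1 q.2)) (pidx r.1 r'.2) (pidx r.1 g) *
                      T (pidx r.1 g) r.2 p.2).
  by apply: eq_bigr => g _; rewrite T_perm.
rewrite (sum_pidx r.1 (fun g => T (pidx r.1 (pidx r'.1 q.2)) (pidx r.1 r'.2) g *
                      T g r.2 p.2)).
by rewrite T_assoc pidxM.
Qed.


Lemma oneE q : AnB_one oneB n q = if q.1 == 1%g then oB q.2 else 0.
Proof. by rewrite ffunE. Qed.

Lemma k3_unit_l (r p : I) : \sum_q AnB_one oneB n q * k3 q r p = (r == p)%:R.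
Proof.
rewrite (@sum_forced _ 1%g); last first.
  by move=> t ne; rewrite oneE (negbTE ne) mul0r.
case: r p => [r1 r2] [p1 p2].
have m1 : (1 * r1 = r1)%g by rewrite mul1g.
under eq_bigr => g _ do rewrite oneE /k3 /= m1 cl1 add0n !eqxx /= andbT.
rewrite xpair_eqE.
case: (r1 == p1) => /=; last by rewrite big1 // => g _; rewrite mulr0.
under eq_bigr => g _ do rewrite -(oB_perm r1 g).
by rewrite (sum_pidx r1 (fun g => oB g * T g r2 p2)) T_unit_l.
Qed.


Lemma k3_unit_r (q p : I) : \sum_r AnB_one oneB n r * k3 q r p = (q == p)%:R.
Proof.
rewrite (@sum_forced _ 1%g); last first.
  by move=> t ne; rewrite oneE (negbTE ne) mul0r.
case: q p => [q1 q2] [p1 p2].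
have m1 : (q1 * 1 = q1)%g by rewrite mulg1.
under eq_bigr => g _ do rewrite oneE /k3 /= m1 cl1 addn0 !eqxx /= andbT pidx1.
rewrite xpair_eqE.
case: (q1 == p1) => /=; last by rewrite big1 // => g _; rewrite mulr0.
rewrite -T_unit_r; apply: eq_bigr => g _; exact: mulrC.
Qed.


Lemma addE (f g : AnB B n) p : (f + g) p = f p + g p.
Proof. by rewrite ffunE. Qed.

Lemma scaleE a (f : AnB B n) p : (a *: f) p = a * f p.
Proof. by rewrite ffunE. Qed.

Lemma reorder4 (F : I -> I -> I -> I -> rat) :
  \sum_t \sum_r \sum_q \sum_r' F t r q r' = \sum_q \sum_r' \sum_r \sum_t F t r q r'.
Proof.
transitivity (\sum_r \sum_q \sum_r' \sum_t F t r q r').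
  rewrite exchange_big; apply: eq_bigr => r _; rewrite exchange_big.
  by apply: eq_bigr => q _; exact: exchange_big.
by rewrite exchange_big; apply: eq_bigr => q _; exact: exchange_big.
Qed.

Lemma AnB_Q_algebra : is_Q_algebra (@AnB_mul B mulB n) (AnB_one oneB n).
Proof.
split.
- move=> a x y z; apply/ffunP => p; rewrite addE scaleE !mulE.
  rewrite mulr_sumr -big_split; apply: eq_bigr => q _.
  rewrite mulr_sumr -big_split; apply: eq_bigr => r _.
  rewrite addE scaleE /=; ring.
- move=> a x y z; apply/ffunP => p; rewrite addE scaleE !mulE.
  rewrite mulr_sumr -big_split; apply: eq_bigr => q _.
  rewrite mulr_sumr -big_split; apply: eq_bigr => r _.
  rewrite addE scaleE /=; ring.
- move=> x y z; apply/ffunP => p; rewrite !mulE.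
  transitivity (\sum_q \sum_r' \sum_r
      x q * y r' * z r * (\sum_s k3 r' r s * k3 q s p)).
    apply: eq_bigr => q _.
    transitivity (\sum_s \sum_r' \sum_r x q * y r' * z r * (k3 r' r s * k3 q s p)).
      apply: eq_bigr => s _; rewrite mulE mulr_sumr mulr_suml.
      apply: eq_bigr => r' _; rewrite mulr_sumr mulr_suml.
      apply: eq_bigr => r _; ring.
    rewrite exchange_big; apply: eq_bigr => r' _; rewrite exchange_big.
    by apply: eq_bigr => r _; rewrite mulr_sumr.
  transitivity (\sum_t \sum_r \sum_q \sum_r'
      x q * y r' * z r * (k3 q r' t * k3 t r p)); last first.
    apply: eq_bigr => t _; apply: eq_bigr => r _.
    rewrite mulE mulr_suml mulr_suml; apply: eq_bigr => q _.
    rewrite mulr_suml mulr_suml; apply: eq_bigr => r' _; ring.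
  rewrite reorder4; apply: eq_bigr => q _; apply: eq_bigr => r' _.
  apply: eq_bigr => r _; by rewrite -k3_assoc mulr_sumr.
- move=> x; apply/ffunP => p; rewrite mulE exchange_big.
  transitivity (\sum_r x r * (\sum_q AnB_one oneB n q * k3 q r p)).
    apply: eq_bigr => r _; rewrite mulr_sumr; apply: eq_bigr => q _; ring.
  under eq_bigr => r _ do rewrite k3_unit_l.
  rewrite (bigD1 p) //= eqxx mulr1 big1 ?addr0 // => r ne.
  by rewrite (negbTE ne) mulr0.
- move=> x; apply/ffunP => p; rewrite mulE.
  transitivity (\sum_q x q * (\sum_r AnB_one oneB n r * k3 q r p)).
    apply: eq_bigr => q _; rewrite mulr_sumr; apply: eq_bigr => r _; ring.
  under eq_bigr => q _ do rewrite k3_unit_r.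
  rewrite (bigD1 p) //= eqxx mulr1 big1 ?addr0 // => r ne.
  by rewrite (negbTE ne) mulr0.
Qed.

Variable tr : B -> rat.
Hypothesis trlin : forall (a : rat) (x y : B), tr (a *: x + y) = a * tr x + tr y.
Hypothesis trnd : forall y : B, y != 0 -> exists y' : B, tr (mulB y y') != 0.

Lemma tr0 : tr 0 = 0.
Proof.
have h := trlin 1 0 0; rewrite scaler0 addr0 mul1r in h.
by apply: (addrI (tr 0)); rewrite addr0 -h.
Qed.

Lemma trZ a x : tr (a *: x) = a * tr x.
Proof. by have := trlin a x 0; rewrite !addr0 tr0 addr0. Qed.

Lemma tr_sum (K : finType) (F : K -> B) : tr (\sum_i F i) = \sum_i tr (F i).
Proof.
apply: (big_ind2 (fun a b => tr a = b)); first exact: tr0.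
  by move=> a b a' b' <- <-; have := trlin 1 a a'; rewrite scale1r mul1r.
by [].
Qed.

Definition tB (k : 'I_d) := tr (e k).
Definition Gm : 'M[rat]_d := \matrix_(a, b) \sum_k c a b k * tB k.

Lemma trGm a b : tr (mulB (e a) (e b)) = Gm a b.
Proof.
rewrite mxE prodE tr_sum; apply: eq_bigr => k _; by rewrite trZ.
Qed.

Lemma tr_bil (u : 'rV[rat]_d) y' :
  tr (mulB (\sum_a u 0 a *: e a) y') = \sum_b coord X b y' * (u *m Gm) 0 b.
Proof.
rewrite mulB_suml tr_sum.
transitivity (\sum_a \sum_b u 0 a * (coord X b y' * Gm a b)).
  apply: eq_bigr => a _; rewrite mulBZl trZ {1}(expand y') mulB_sumr tr_sum mulr_sumr.
  by apply: eq_bigr => b _; rewrite mulBZr trZ trGm.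
rewrite exchange_big; apply: eq_bigr => b _; rewrite mxE mulr_sumr.
apply: eq_bigr => a _; ring.
Qed.

Lemma Gm_unit : Gm \in unitmx.
Proof.
rewrite -row_free_unit -kermx_eq0; apply/negPn/negP => nz.
case: (pickP (fun ij : 'I_d * 'I_d => kermx Gm ij.1 ij.2 != 0)) => [[i j] /= hij|h];
  last first.
  apply: (negP nz); apply/eqP/matrixP => i j.
  by have := h (i, j); rewrite /= => /negbFE /eqP ->; rewrite mxE.
pose u := row i (kermx Gm).
have uG : u *m Gm = 0 by rewrite /u -row_mul mulmx_ker row0.
have ynz : (\sum_a u 0 a *: e a) != 0.
  apply: contraNneq hij => h0.
  have : coord X j (\sum_a u 0 a *: e a) = u 0 j.
    under eq_bigr => a _ do rewrite (tnth_nth 0).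
    by rewrite coord_sum_free // (basis_free (vbasisP fullv)).
  by rewrite h0 raddf0 /u mxE => <-.
have [y' hy] := trnd ynz.
move: hy; rewrite tr_bil uG big1 ?eqxx // => b _; by rewrite mxE mulr0.
Qed.

Definition Hm := invmx Gm.

Lemma GH a b : \sum_k Gm a k * Hm k b = (a == b)%:R.
Proof. by have := mulmxV Gm_unit => /matrixP/(_ a b); rewrite !mxE. Qed.

Definition Tt (g : J) := \prod_(i < n) tB (g i).
Definition Gn (a g : J) := \sum_ep T a g ep * Tt ep.
Definition Hn (g b : J) := \prod_(i < n) Hm (g i) (b i).

Lemma Gn_prod a g : Gn a g = \prod_(i < n) Gm (a i) (g i).
Proof.
rewrite /Gn.
transitivity (\prod_(i < n) \sum_k (c (a i) (g i) k * tB k)).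
  by rewrite distr'; apply: eq_bigr => ep _; rewrite big_split.
by apply: eq_bigr => i _; rewrite mxE.
Qed.

Lemma GnHn a b : \sum_g Gn a g * Hn g b = (a == b)%:R.
Proof.
transitivity (\prod_(i < n) \sum_k (Gm (a i) k * Hm k (b i))).
  by rewrite distr'; apply: eq_bigr => g _; rewrite big_split Gn_prod.
rewrite -prod_delta'; apply: eq_bigr => i _; exact: GH.
Qed.

Variable w0 : 'S_n.
Hypothesis Hw0 : forall u : 'S_n, L w0 = (L u + L (u^-1 * w0)%g)%N.

Definition trA (x : AnB B n) := \sum_g x (w0, g) * Tt g.

Lemma trA_lin a x y : trA (a *: x + y) = a * trA x + trA y.
Proof.
rewrite /trA mulr_sumr -big_split; apply: eq_bigr => g _.
rewrite addE scaleE /=; ring.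
Qed.

Definition delta (q0 : I) : AnB B n := [ffun q => (q == q0)%:R].

Lemma trA_delta (y : AnB B n) (u : 'S_n) ga :
  trA (AnB_mul mulB y (delta ((u^-1 * w0)%g, ga))) =
  \sum_al y (u, al) * Gn (pidx (u^-1 * w0)%g al) ga.
Proof.
set v := (u^-1 * w0)%g.
have Ev : forall q1 : 'S_n, (q1 * v == w0)%g = (q1 == u).
  move=> q1; apply/eqP/eqP => [h|->]; last by rewrite /v mulKVg.
  have h2 : (q1 * u^-1 = 1)%g.
    by apply: (mulIg w0); rewrite -mulgA h mul1g.
  by rewrite -(mulgKV u q1) h2 mul1g.
have Lv : (L (u * v)%g == L u + L v)%N.
  by rewrite /v mulKVg -Hw0.
have MD : forall ep, AnB_mul mulB y (delta (v, ga)) (w0, ep) =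
    \sum_al y (u, al) * T (pidx v al) ga ep.
  move=> ep; rewrite mulE.
  transitivity (\sum_q y q * k3 q (v, ga) (w0, ep)).
    apply: eq_bigr => q _; rewrite (bigD1 (v, ga)) //= big1 ?addr0.
      by rewrite ffunE eqxx mulr1.
    by move=> r ne; rewrite ffunE (negbTE ne) mulr0 mul0r.
  rewrite (@sum_forced _ u); last first.
    by move=> t ne; rewrite /k3 /= Ev (negbTE ne) mulr0.
  apply: eq_bigr => al _; by rewrite /k3 /= Ev eqxx Lv.
rewrite /trA.
transitivity (\sum_ep \sum_al y (u, al) * (T (pidx v al) ga ep * Tt ep)).
  apply: eq_bigr => ep _; rewrite MD mulr_suml; apply: eq_bigr => al _.
  by rewrite mulrA.
rewrite exchange_big; apply: eq_bigr => al _; by rewrite -mulr_sumr.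
Qed.

Lemma trA_nd (y : AnB B n) : y != 0 -> exists y', trA (AnB_mul mulB y y') != 0.
Proof.
move=> ynz.
have [[u al0] hp] : exists p, y p != 0.
  case: (pickP (fun p => y p != 0)) => [p hp|h]; first by exists p.
  case/eqP: ynz; apply/ffunP => p; rewrite ffunE.
  by have := h p => /negbFE /eqP.
set v := (u^-1 * w0)%g.
case: (pickP (fun ga => trA (AnB_mul mulB y (delta (v, ga))) != 0)) => [ga hga|h].
  by exists (delta (v, ga)).
exfalso; apply/(negP hp)/eqP.
have H0 : forall ga, \sum_al y (u, al) * Gn (pidx v al) ga = 0.
  by move=> ga; rewrite -trA_delta; have := h ga => /negbFE /eqP.
pose z be := y (u, pidx (v^-1)%g be).
have Hz : forall ga, \sum_be z be * Gn be ga = 0.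
  move=> ga; have := sum_pidx v (fun be => z be * Gn be ga); rewrite /= => <-.
  by rewrite -[RHS](H0 ga); apply: eq_bigr => al _; rewrite /z pidxK.
have : z (pidx v al0) = 0.
  transitivity (\sum_be z be * (be == pidx v al0)%:R).
    rewrite (bigD1 (pidx v al0)) //= eqxx mulr1 big1 ?addr0 // => be ne.
    by rewrite (negbTE ne) mulr0.
  transitivity (\sum_be z be * \sum_ga Gn be ga * Hn ga (pidx v al0)).
    by apply: eq_bigr => be _; rewrite GnHn.
  transitivity (\sum_ga (\sum_be z be * Gn be ga) * Hn ga (pidx v al0)).
    under eq_bigr do rewrite mulr_sumr.
    rewrite exchange_big; apply: eq_bigr => ga _; rewrite mulr_suml.
    by apply: eq_bigr => be _; rewrite mulrA.
  by rewrite big1 // => ga _; rewrite Hz mul0r.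
by rewrite /z pidxK.
Qed.

End BLevel.

Theorem mainTheorem17 (B : vectType rat) (mulB : B -> B -> B) (oneB : B) (n : nat) :
  is_frobenius_algebra mulB oneB ->
  is_frobenius_algebra (@AnB_mul B mulB n) (AnB_one oneB n).
Proof.
move=> [HB [tr [trlin trnd]]].
have [w0 Hw0] := w0_ex n.
split; first exact: AnB_Q_algebra.
exists (trA tr w0); split; first exact: trA_lin.
move=> y ynz; exact: (trA_nd HB trlin trnd Hw0 ynz).
Qed.
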